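(* Let $p$ be a prime and $b$ an integer with $0<b<\frac{p-1}{2}$. Then $(p-b)(p-b^{-1})=2p+1$ if and only if $\frac{p-1}{3}\in\mathbb{Z}$ and $b=\frac{p-1}{3}$.
   Context: $b^{-1}$ is the unique integer $0<b^{-1}<p$ with $bb^{-1}\equiv1\pmod p$. *)

(* Defs.v *)
From mathcomp Require Import all_boot.
Set Implicit Arguments. Unset Strict Implicit. Unset Printing Implicit Defensive.

Definition is_modinv (p b binv : nat) : Prop :=
  0 < binv < p /\ b * binv = 1 %[mod p].

(* Main.v *)
Require Import Defs.
From mathcomp Require Import all_boot.
From mathcomp Require Import zify.

Theorem lemma5p3 (p b binv : nat) :
  prime p -> 0 < b -> 2 * b < p - 1 -> is_modinv p b binv ->
  ((p - b) * (p - binv) = 2 * p + 1 <->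
   (3 %| p - 1 /\ b = (p - 1) %/ 3)).
Proof.
move=> pp b0 hb [/andP [c0 cp] hm]; split.
- move=> E.
  have hy : p - binv <= 3.
    rewrite leqNgt; apply/negP => H.
    have : 4 * (p - b) <= (p - b) * (p - binv) by rewrite mulnC leq_mul2l H orbT.
    rewrite E; lia.
  have [y Hy] : exists y, y = p - binv by exists (p - binv).
  rewrite -Hy in E hy.
  have hpb : p - 1 = 3 * b.
    move: E hy; case: y {Hy} => [|[|[|[|y]]]] //=; lia.
  rewrite hpb; split; first by rewrite dvdn_mulr.
  by rewrite mulKn.
- move=> [hd hbe].
  have hpb : p - 1 = 3 * b by rewrite hbe mulnC divnK.
  have h3 : (3 * b) * binv = 3 %[mod p] by rewrite -mulnA -modnMmr hm modnMmr muln1.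
  have h4 : (binv + 3) %% p = 0.
    have : (binv + 3 * b * binv) %% p = 0.
      rewrite -{1}(mul1n binv) -mulnDl -hpb.
      have -> : 1 + (p - 1) = p by lia.
      by rewrite modnMr.
    by rewrite -modnDmr h3 modnDmr.
  have hp : binv + 3 = p.
    move/eqP: h4; rewrite -/(p %| binv + 3) => /dvdnP [k hk].
    have : 0 < k by move: hk; case: k => //=; lia.
    have : k < 2 by move: hk; case: k => [|[|k]] //=; lia.
    move: hk; case: k => [|[|k]] //=; lia.
  clear -hp hpb b0 hb.
  have -> : p - binv = 3 by lia.
  lia.
Qed.
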